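(* Let $M$ be a model with borders, let $f:M^s\to U(n)$ be the unique p-morphism with image $M_{\wedge,\to}$, let $h:\mathcal U(M_{\wedge,\to})\to\mathcal U(M^s)$ be $h(U)=f^{-1}(U)$, and let $r:\mathcal U(M^s)\to\mathcal U(M)$ be $r(V)=\{x\in M\mid\forall y\ge x\,(y\in M^s\Rightarrow y\in V)\}$. Let $B$ be the $(\wedge,\to)$-subalgebra of $\mathcal U(M)$ generated by $v(p_1),\dots,v(p_n)$. Then $B$ equals the image of $r\circ h$. In particular, $B$ is isomorphic, as an implicative meet-semilattice, to $\mathcal U(M_{\wedge,\to})$.
   Context: Fix $n\ge1$ and variables $p_1,\dots,p_n$; $2^n=\{0,1\}^n$ with componentwise order. A model is $(M,\le,c)$, $(M,\le)$ a poset, $c:M\to 2^n$ order-preserving, with intuitionistic Kripke semantics; $v(\varphi)$ is the set of points satisfying $\varphi$. $\mathcal U(X)$ is the Heyting algebra of up-sets of a poset $X$. A p-morphism of models is an order- and colour-preserving map $f$ such that $f(x)\le y$ implies $f(x')=y$ for some $x'\ge x$. A point $x$ is a $q$-border point if $x\not\models q$ and all $y>x$ satisfy $q$; separated if it is a $q$-border point for some variable $q$. $M^s$: separated points with restricted order and colouring (all chains have at most $n$ elements). $M$ has borders if for every variable $p$ and every $x$ with $x\not\models p$ there is a $p$-border point $y\ge x$. $U(n)$ is the $n$-universal model: the generated submodel of the canonical model of IPC on $p_1,\dots,p_n$ (prime filters of the free Heyting algebra ordered by inclusion, $c(x)_i=1$ iff $p_i\in x$) consisting of points with finite up-set. For every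 model of finite depth there is a unique p-morphism into $U(n)$. $M_{\wedge,\to}$ is the image of the unique p-morphism $M^s\to U(n)$, a generated submodel of $U(n)$. *)

(* Defs.v *)
From mathcomp Require Import all_boot.
From Stdlib Require Import List.
Set Implicit Arguments.
Unset Strict Implicit.
Unset Printing Implicit Defensive.

Inductive form (n : nat) : Type :=
| Var : 'I_n -> form n
| Bot : form n
| And : form n -> form n -> form n
| Or  : form n -> form n -> form n
| Imp : form n -> form n -> form n.
Arguments Bot {n}.

Definition Top {n} : form n := Imp Bot Bot.

Inductive prov (n : nat) : form n -> Prop :=
| ax_K a b : prov (Imp a (Imp b a))
| ax_S a b d : prov (Imp (Imp a (Imp b d)) (Imp (Imp a b) (Imp a d)))
| ax_and1 a b : prov (Imp (And a b) a)
| ax_and2 a b : prov (Imp (And a b) b)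
| ax_andI a b : prov (Imp a (Imp b (And a b)))
| ax_or1 a b : prov (Imp a (Or a b))
| ax_or2 a b : prov (Imp b (Or a b))
| ax_orE a b d : prov (Imp (Imp a d) (Imp (Imp b d) (Imp (Or a b) d)))
| ax_efq a : prov (Imp Bot a)
| mp a b : prov (Imp a b) -> prov a -> prov b.

(** Prime filters of the free Heyting algebra (Lindenbaum algebra of IPC on
    n variables, ordered by a <= b iff |- a -> b), represented as the set of
    formulas whose classes lie in the filter. *)
Definition prime_filter n (G : form n -> Prop) : Prop :=
  [/\ G Top,
      (forall a b, G a -> G b -> G (And a b)),
      (forall a b, G a -> prov (Imp a b) -> G b),
      ~ G Bot &
      (forall a b, G (Or a b) -> G a \/ G b)].

Definition CanPt n := {G : form n -> Prop | prime_filter G}.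
Definition can_le n (x y : CanPt n) : Prop :=
  forall a, proj1_sig x a -> proj1_sig y a.
Definition finite_upset n (x : CanPt n) : Prop :=
  exists l : list (CanPt n), forall y, can_le x y -> List.In y l.

(** n-universal model U(n): points of the canonical model with finite up-set *)
Definition UPt n := {x : CanPt n | finite_upset x}.
Definition U_le n (w1 w2 : UPt n) : Prop := can_le (proj1_sig w1) (proj1_sig w2).
Definition U_col n (w : UPt n) (i : 'I_n) : Prop := proj1_sig (proj1_sig w) (Var i).

Definition upset {X : Type} (R : X -> X -> Prop) (U : X -> Prop) : Prop :=
  forall x y, R x y -> U x -> U y.
Definition meetU {X : Type} (A B : X -> Prop) : X -> Prop := fun x => A x /\ B x.
Definition impU {X : Type} (R : X -> X -> Prop) (A B : X -> Prop) : X -> Prop :=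
  fun x => forall y, R x y -> A y -> B y.

Section Kripke.
Variables (n : nat) (T : Type) (le : T -> T -> Prop) (c : T -> 'I_n -> bool).

Fixpoint sat (x : T) (a : form n) : Prop :=
  match a with
  | Var i => c x i
  | Bot => False
  | And a b => sat x a /\ sat x b
  | Or a b => sat x a \/ sat x b
  | Imp a b => forall y, le x y -> sat y a -> sat y b
  end.

Definition v (a : form n) : T -> Prop := fun x => sat x a.

Definition border (q : 'I_n) (x : T) : Prop :=
  ~ sat x (Var q) /\ (forall y, le x y -> y <> x -> sat y (Var q)).
Definition separated (x : T) : Prop := exists q, border q x.
Definition has_borders : Prop :=
  forall q x, ~ sat x (Var q) -> exists y, le x y /\ border q y.

Definition Ms := {x : T | separated x}.
Definition Ms_le (x y : Ms) : Prop := le (proj1_sig x) (proj1_sig y).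

Definition is_pmorphism (f : Ms -> UPt n) : Prop :=
  [/\ (forall x y, Ms_le x y -> U_le (f x) (f y)),
      (forall x i, c (proj1_sig x) i = true <-> U_col (f x) i) &
      (forall x w, U_le (f x) w -> exists x', Ms_le x x' /\ f x' = w)].

Inductive inB : (T -> Prop) -> Prop :=
| inB_var i : inB (v (Var i))
| inB_meet A B : inB A -> inB B -> inB (meetU A B)
| inB_imp A B : inB A -> inB B -> inB (impU le A B).

Definition r (V : Ms -> Prop) : T -> Prop :=
  fun x => forall y : Ms, le x (proj1_sig y) -> V y.

Section Image.
Variable f : Ms -> UPt n.
Definition Mimg := {w : UPt n | exists x, f x = w}.
Definition Mimg_le (w1 w2 : Mimg) : Prop := U_le (proj1_sig w1) (proj1_sig w2).
Definition fimg (x : Ms) : Mimg := exist _ (f x) (ex_intro _ x erefl).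
Definition h (U : Mimg -> Prop) : Ms -> Prop := fun x => U (fimg x).
End Image.
End Kripke.

(* Main.v *)
Require Import Defs.
From mathcomp Require Import all_boot.
From Stdlib Require Import List Classical ClassicalEpsilon FunctionalExtensionality PropExtensionality.
Set Implicit Arguments.
Unset Strict Implicit.
Unset Printing Implicit Defensive.

Section Logic.
Variable n : nat.
Implicit Types (a b c d x y z : form n) (l : list (form n)).

Fixpoint enc (a : form n) : GenTree.tree 'I_n :=
  match a with
  | Var i => GenTree.Leaf i
  | Bot => GenTree.Node 0 [::]
  | And a b => GenTree.Node 1 [:: enc a; enc b]
  | Or a b => GenTree.Node 2 [:: enc a; enc b]
  | Imp a b => GenTree.Node 3 [:: enc a; enc b]
  end.

Fixpoint dec (t : GenTree.tree 'I_n) : form n :=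
  match t with
  | GenTree.Leaf i => Var i
  | GenTree.Node 1 [:: t1; t2] => And (dec t1) (dec t2)
  | GenTree.Node 2 [:: t1; t2] => Or (dec t1) (dec t2)
  | GenTree.Node 3 [:: t1; t2] => Imp (dec t1) (dec t2)
  | _ => Bot
  end.

Lemma encK : cancel enc dec.
Proof. by elim=> //= a -> b ->. Qed.

Definition enum_form (k : nat) : form n :=
  match unpickle k with Some t => dec t | None => Bot end.

Lemma enum_form_surj a : exists k, enum_form k = a.
Proof. exists (pickle (enc a)). by rewrite /enum_form pickleK encK. Qed.

Inductive der (l : list (form n)) : form n -> Prop :=
| d_hyp a : List.In a l -> der l a
| d_ax a : prov a -> der l a
| d_mp a b : der l (Imp a b) -> der l a -> der l b.
Arguments d_hyp {l a}. Arguments d_ax {l a}. Arguments d_mp {l a b}.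

Lemma prov_id a : prov (Imp a a).
Proof. exact: (mp (mp (ax_S a (Imp a a) a) (ax_K a (Imp a a))) (ax_K a a)). Qed.

Lemma ded c l a : der (c :: l) a -> der l (Imp c a).
Proof.
elim=> {a} [a [->|Ha]|a Ha|a b _ IH1 _ IH2].
- exact: d_ax (prov_id a).
- exact: d_mp (d_ax (ax_K a c)) (d_hyp Ha).
- exact: d_mp (d_ax (ax_K a c)) (d_ax Ha).
- exact: d_mp (d_mp (d_ax (ax_S c a b)) IH1) IH2.
Qed.

Lemma der_weak l l' a : der l a -> (forall x, List.In x l -> List.In x l') -> der l' a.
Proof.
move=> H Hs; elim: H => {a} [a Ha|a Ha|a b _ IH1 _ IH2].
- exact: d_hyp (Hs _ Ha).
- exact: d_ax.
- exact: d_mp IH1 IH2.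
Qed.

Lemma der_nil a : der nil a -> prov a.
Proof. move=> H; elim: H => // a0 b0 _ H1 _ H2; exact: mp H1 H2. Qed.

Lemma prov_mpand a b : prov (Imp (And (Imp a b) a) b).
Proof.
apply: der_nil; apply: ded.
have Hh : List.In (And (Imp a b) a) [:: And (Imp a b) a] by left.
exact: d_mp (d_mp (d_ax (ax_and1 _ _)) (d_hyp Hh)) (d_mp (d_ax (ax_and2 _ _)) (d_hyp Hh)).
Qed.

Lemma filter_der (G : form n -> Prop) l x : prime_filter G ->
  (forall y, List.In y l -> G y) -> der l x -> G x.
Proof.
case=> Htop Hand Hprov _ _ Hl; elim=> {x} [a Ha|a Ha|a b _ IH1 _ IH2].
- exact: Hl.
- apply: (Hprov Top); first exact: Htop. exact: mp (ax_K a Top) Ha.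
- apply: (Hprov (And (Imp a b) a)); first exact: Hand. exact: prov_mpand.
Qed.

Definition Cl (A : form n -> Prop) x := exists l, (forall y, List.In y l -> A y) /\ der l x.

Lemma Cl_mono (A B : form n -> Prop) x : (forall y, A y -> B y) -> Cl A x -> Cl B x.
Proof. move=> H [l [Hl Hd]]; exists l; split=> // y /Hl; exact: H. Qed.

Lemma split_list (A : form n -> Prop) x l : (forall y, List.In y l -> A y \/ y = x) ->
  exists l', (forall y, List.In y l' -> A y) /\ (forall y, List.In y l -> List.In y (x :: l')).
Proof.
elim: l => [|z l IH] H; first by exists nil.
have [l' [H1 H2]] : exists l', (forall y, List.In y l' -> A y) /\ (forall y, List.In y l -> List.In y (x :: l')).
  by apply: IH => y Hy; apply: H; right.
case: (H z (or_introl erefl)) => [Hz|->].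
- exists (z :: l'); split.
  + by move=> y [<-|/H1].
  + move=> y [<-|/H2 [->|Hy]]; [right; left| left| right; right] => //.
- exists l'; split=> // y [<-|/H2]; [left|] => //.
Qed.

Lemma Cl_ded (A : form n -> Prop) x b : Cl (fun y => A y \/ y = x) b ->
  exists l, (forall y, List.In y l -> A y) /\ der l (Imp x b).
Proof.
move=> [l [Hl Hd]]; have [l' [H1 H2]] := split_list Hl.
exists l'; split=> //; apply: ded; exact: der_weak Hd H2.
Qed.

Lemma in_app_l (y : form n) l1 l2 : List.In y l1 -> List.In y (l1 ++ l2).
Proof. by move=> H; apply: List.in_or_app; left. Qed.
Lemma in_app_r (y : form n) l1 l2 : List.In y l2 -> List.In y (l1 ++ l2).
Proof. by move=> H; apply: List.in_or_app; right. Qed.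

Lemma Cl_cut (A : form n -> Prop) x b : Cl A x -> Cl (fun y => A y \/ y = x) b -> Cl A b.
Proof.
move=> [l1 [H1 D1]] H; have [l2 [H2 D2]] := Cl_ded H.
exists (l1 ++ l2); split.
- move=> y Hy; case: (List.in_app_or _ _ _ Hy) => [/H1|/H2] //.
- apply: (d_mp (a:=x)); [apply: (der_weak D2)|apply: (der_weak D1)] => y; [exact: in_app_r|exact: in_app_l].
Qed.

Lemma Cl_or (A : form n -> Prop) c d b : Cl A (Or c d) ->
  Cl (fun y => A y \/ y = c) b -> Cl (fun y => A y \/ y = d) b -> Cl A b.
Proof.
move=> [l1 [H1 D1]] Hc Hd; have [l2 [H2 D2]] := Cl_ded Hc; have [l3 [H3 D3]] := Cl_ded Hd.
exists (l1 ++ (l2 ++ l3)); split.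
- move=> y Hy; case: (List.in_app_or _ _ _ Hy) => [/H1 //|Hy'].
  by case: (List.in_app_or _ _ _ Hy') => [/H2|/H3].
- apply: (d_mp (a:=Or c d)); last by apply: (der_weak D1) => y; apply: in_app_l.
  apply: (d_mp (a:=Imp d b)); last by apply: (der_weak D3) => y Hy; apply: in_app_r; apply: in_app_r.
  apply: (d_mp (a:=Imp c b)); last by apply: (der_weak D2) => y Hy; apply: in_app_r; apply: in_app_l.
  exact: d_ax (ax_orE _ _ _).
Qed.

Section Lind.
Variables (G0 : form n -> Prop) (b : form n).
Hypothesis Hb : ~ Cl G0 b.
Let e := enum_form.

Fixpoint Gam k : form n -> Prop :=
  match k with
  | 0 => G0
  | S k => fun x => Gam k x \/ (x = e k /\ ~ Cl (fun y => Gam k y \/ y = e k) b)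
  end.

Definition Delta x := exists k, Gam k x.

Lemma Gam_le k m x : (k <= m)%coq_nat -> Gam k x -> Gam m x.
Proof. elim=> // m' _ IH /IH H; by left. Qed.

Lemma Gam_nb k : ~ Cl (Gam k) b.
Proof.
elim: k => [|k IH] //= HC.
case: (classic (Cl (fun y => Gam k y \/ y = e k) b)) => Hc.
- apply: IH; apply: Cl_mono HC => y [//|[_ /(_ Hc)]] [].
- apply: Hc; apply: Cl_mono HC => y [H|[-> _]]; by [left|right].
Qed.

Lemma list_Gam l : (forall y, List.In y l -> Delta y) -> exists k, forall y, List.In y l -> Gam k y.
Proof.
elim: l => [|z l IH] H; first by exists 0.
have [k Hk] : exists k, forall y, List.In y l -> Gam k y by apply: IH => y Hy; apply: H; right.
have [k' Hk'] := H z (or_introl erefl).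
exists (Nat.max k k') => y [<-|Hy].
- apply: Gam_le Hk'; exact: PeanoNat.Nat.le_max_r.
- apply: Gam_le (Hk _ Hy); exact: PeanoNat.Nat.le_max_l.
Qed.

Lemma Delta_nb : ~ Cl Delta b.
Proof.
move=> [l [Hl Hd]]; have [k Hk] := list_Gam Hl; apply: (@Gam_nb k); by exists l.
Qed.

Lemma notDelta x : ~ Delta x -> Cl (fun y => Delta y \/ y = x) b.
Proof.
move=> Hx; have [k Hk] := enum_form_surj x.
case: (classic (Cl (fun y => Gam k y \/ y = e k) b)) => Hc.
- apply: Cl_mono Hc => y [Hy|->]; [left; by exists k|right; exact: Hk].
- exfalso; apply: Hx; exists k.+1; right; split=> //; by rewrite /e Hk.
Qed.

Lemma Delta_closed x : Cl Delta x -> Delta x.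
Proof.
move=> H; apply: NNPP => Hx; apply: Delta_nb; exact: Cl_cut H (notDelta Hx).
Qed.

Lemma G0_Delta x : G0 x -> Delta x.
Proof. by exists 0. Qed.

Lemma Delta_pf : prime_filter Delta.
Proof.
split.
- apply: Delta_closed; exists nil; split=> //; exact: d_ax (prov_id _).
- move=> a c Ha Hc; apply: Delta_closed; exists [:: a; c]; split.
  + by move=> y [<-|[<-|[]]].
  + apply: (d_mp (a:=c)); last by apply: d_hyp; right; left.
    apply: (d_mp (d_ax (ax_andI _ _))); by apply: d_hyp; left.
- move=> a c Ha Hp; apply: Delta_closed; exists [:: a]; split.
  + by move=> y [<-|[]].
  + apply: (d_mp (d_ax Hp)); by apply: d_hyp; left.
- move=> HB; apply: Delta_nb; exists [:: Bot]; split; first by move=> y [<-|[]].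
  apply: (d_mp (d_ax (ax_efq _))); by apply: d_hyp; left.
- move=> c d Hcd; apply: NNPP => Hn.
  apply: Delta_nb; apply: (Cl_or (c:=c) (d:=d)).
  + exists [:: Or c d]; split; first by move=> y [<-|[]].
    by apply: d_hyp; left.
  + apply: notDelta => H; apply: Hn; by left.
  + apply: notDelta => H; apply: Hn; by right.
Qed.

End Lind.

Lemma lindenbaum (G0 : form n -> Prop) b : ~ Cl G0 b ->
  exists D, prime_filter D /\ (forall x, G0 x -> D x) /\ ~ D b.
Proof.
move=> Hb; exists (Delta G0 b); split; first exact: Delta_pf.
split; first exact: G0_Delta.
move=> H; apply: (Delta_nb Hb); exists [:: b]; split; first by move=> y [<-|[]].
by apply: d_hyp; left.
Qed.

End Logic.

Arguments d_ax {n l a}. Arguments d_hyp {n l a}. Arguments d_mp {n l a b}.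
Section Univ.
Variable n : nat.
Implicit Types (a b c d x y z : form n) (l : list (form n)) (w v u G : UPt n).

Definition umem w a := proj1_sig (proj1_sig w) a.

Lemma UPt_pf w : prime_filter (proj1_sig (proj1_sig w)).
Proof. exact: proj2_sig (proj1_sig w). Qed.

Lemma mem_der w l a : (forall y, List.In y l -> umem w y) -> der l a -> umem w a.
Proof. move=> Hl Hd; exact: filter_der (UPt_pf w) Hl Hd. Qed.

Lemma mem_prov w a : prov a -> umem w a.
Proof. move=> H; apply: (@mem_der w nil) => //; exact: d_ax H. Qed.

Lemma mem_mp w a b : umem w (Imp a b) -> umem w a -> umem w b.
Proof.
move=> H1 H2; apply: (@mem_der w [:: Imp a b; a]); first by move=> y [<-|[<-|[]]].
apply: (d_mp (a:=a)); apply: d_hyp; [left|right; left] => //.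
Qed.

Lemma mem_and w a b : umem w (And a b) <-> umem w a /\ umem w b.
Proof.
split.
- move=> H; split; apply: (@mem_der w [:: And a b]); try by move=> y [<-|[]].
  + apply: (d_mp (a := And a b)); first exact: (d_ax (ax_and1 a b)).
    by apply: d_hyp; left.
  + apply: (d_mp (a := And a b)); first exact: (d_ax (ax_and2 a b)).
    by apply: d_hyp; left.
- case=> H1 H2; case: (UPt_pf w) => _ Hand _ _ _; exact: Hand.
Qed.

Lemma mem_or w a b : umem w (Or a b) <-> umem w a \/ umem w b.
Proof.
split; first by case: (UPt_pf w) => _ _ _ _ Hp; exact: Hp.
case=> H.
- apply: (@mem_der w [:: a]); first by move=> y [<-|[]].
  apply: (d_mp (a := a)); first exact: (d_ax (ax_or1 a b)).
  by apply: d_hyp; left.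
- apply: (@mem_der w [:: b]); first by move=> y [<-|[]].
  apply: (d_mp (a := b)); first exact: (d_ax (ax_or2 a b)).
  by apply: d_hyp; left.
Qed.

Lemma mem_bot w : ~ umem w Bot.
Proof. by case: (UPt_pf w). Qed.

Lemma U_le_refl w : U_le w w.
Proof. by []. Qed.

Lemma U_le_trans w v u : U_le w v -> U_le v u -> U_le w u.
Proof. move=> H1 H2 a Ha; exact: H2 (H1 a Ha). Qed.

Lemma U_le_mem w v a : U_le w v -> umem w a -> umem v a.
Proof. move=> H; exact: H. Qed.

Lemma mem_imp w a b : umem w (Imp a b) <-> (forall G, U_le w G -> umem G a -> umem G b).
Proof.
split.
- move=> H G Hle Ha; apply: mem_mp Ha; exact: Hle.
- move=> H; apply: NNPP => Hn.
  have HC : ~ Cl (fun x => umem w x \/ x = a) b.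
    move=> HC; have [l [Hl Hd]] := Cl_ded HC; apply: Hn; exact: mem_der Hl Hd.
  have [D [HD [Hsub Hnb]]] := lindenbaum HC.
  pose cD : CanPt n := exist _ D HD.
  have Hfin : finite_upset cD.
    case: (proj2_sig w) => L HL; exists L => y Hy; apply: HL => x Hx.
    apply: Hy; apply: Hsub; by left.
  pose G : UPt n := exist _ cD Hfin.
  apply: Hnb; apply: (H G).
  + move=> x Hx; apply: Hsub; by left.
  + apply: Hsub; by right.
Qed.

Lemma bisim_half w v :
  (forall a, (umem w a <-> umem v a) -> True) -> True.
Proof. by []. Qed.

Lemma bisim w v :
  (forall i, umem w (Var i) <-> umem v (Var i)) ->
  (forall G, U_le w G -> ~ U_le G w -> U_le v G) ->
  (forall G, U_le v G -> ~ U_le G v -> U_le w G) ->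
  forall a, umem w a <-> umem v a.
Proof.
move=> Hc Hwv Hvw; elim=> [i||a IHa b IHb|a IHa b IHb|a IHa b IHb].
- exact: Hc.
- split=> H; exfalso; exact: mem_bot H.
- by rewrite !mem_and IHa IHb.
- by rewrite !mem_or IHa IHb.
- rewrite !mem_imp; split=> H G HG Ha.
  + case: (classic (U_le G v)) => HGv.
    * suff Hv : umem v b by exact: U_le_mem HG Hv.
      apply/IHb; apply: (H w); first exact: U_le_refl.
      apply/IHa; exact: U_le_mem HGv Ha.
    * exact: H G (Hvw G HG HGv) Ha.
  + case: (classic (U_le G w)) => HGw.
    * suff Hv : umem w b by exact: U_le_mem HG Hv.
      apply/IHb; apply: (H v); first exact: U_le_refl.
      apply/IHa; exact: U_le_mem HGw Ha.
    * exact: H G (Hwv G HG HGw) Ha.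
Qed.

Definition colb w (i : 'I_n) : bool :=
  if excluded_middle_informative (umem w (Var i)) then true else false.

Lemma colbP w i : colb w i = true <-> umem w (Var i).
Proof. rewrite /colb; by case: excluded_middle_informative. Qed.

Definition nf w := #|[pred i : 'I_n | ~~ colb w i]|.

Lemma nf_lt w u q : (forall i, umem w (Var i) -> umem u (Var i)) ->
  ~ umem w (Var q) -> umem u (Var q) -> nf u < nf w.
Proof.
move=> Hs Hq Huq; apply: proper_card; apply/properP; split.
- apply/subsetP => i; rewrite !inE; apply: contra => /colbP H; apply/colbP; exact: Hs.
- exists q; rewrite !inE.
  + apply/negP => /colbP; exact: Hq.
  + by rewrite negbK; apply/colbP.
Qed.

Lemma nf_le w : nf w <= n.
Proof. rewrite /nf; apply: leq_trans (max_card _) _; by rewrite card_ord. Qed.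

End Univ.

Inductive isF n : form n -> Prop :=
| F_var i : isF (Var i)
| F_and a b : isF a -> isF b -> isF (And a b)
| F_imp a b : isF a -> isF b -> isF (Imp a b).


Fixpoint subs (X : Type) (l : list X) : list (list X) :=
  match l with
  | nil => [:: nil]
  | x :: l => subs l ++ List.map (cons x) (subs l)
  end.

Lemma subs_complete (X : Type) (l : list X) (P : X -> Prop) :
  exists S, List.In S (subs l) /\ (forall x, List.In x S <-> List.In x l /\ P x).
Proof.
elim: l => [|y l [S [HS HSP]]] /=.
- exists nil; split; first by left. by move=> x; split=> [[]|[[]]].
- case: (classic (P y)) => Py.
  + exists (y :: S); split.
    * apply: List.in_or_app; right; exact: List.in_map.
    * move=> x /=; split.
      - by case=> [<-|/HSP [H1 H2]]; split=> //; [left|right].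
      - case=> [[<-|H1] H2]; [by left|right; exact/HSP].
  + exists S; split.
    * apply: List.in_or_app; by left.
    * move=> x; rewrite HSP /=; split.
      - by case=> H1 H2; split=> //; right.
      - by case=> [[<-|H1] H2] //; split.
Qed.

Lemma in_seq (X : eqType) (x : X) (s : list X) : x \in s -> List.In x s.
Proof.
elim: s => [|y s IH] //; rewrite seq.in_cons => /orP [/eqP ->|/IH H]; by [left|right].
Qed.

Lemma in_enum_ord m (i : 'I_m) : List.In i (enum 'I_m).
Proof. apply: in_seq; by rewrite mem_enum. Qed.

Fixpoint conjq n (q : 'I_n) (l : list (form n)) : form n :=
  match l with
  | nil => Imp (Var q) (Var q)
  | x :: l => And x (conjq q l)
  end.

Lemma umem_conj n (w : UPt n) q l : umem w (conjq q l) <-> (forall x, List.In x l -> umem w x).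
Proof.
elim: l => [|y l IH] /=.
- split=> // _; apply: mem_prov; exact: prov_id.
- rewrite mem_and IH; split.
  + by case=> H1 H2 x [<-|/H2].
  + move=> H; split; [apply: H; left|move=> x Hx; apply: H; right] => //.
Qed.

Lemma isF_conj n (q : 'I_n) l : (forall x, List.In x l -> isF x) -> isF (conjq q l).
Proof.
elim: l => [|y l IH] H /=; first by constructor; constructor.
constructor; [apply: H; left|apply: IH => x Hx; apply: H; right] => //.
Qed.

Definition Aq n (q : 'I_n) (L : list (form n)) : list (form n) :=
  List.map (fun i => Var i) (enum 'I_n) ++
  (List.map (fun i => Imp (Var i) (Var q)) (enum 'I_n) ++
  (L ++ List.map (fun p => Imp p (Var q)) L)).

Definition cands n (L : list (form n)) : list (form n) :=
  List.flat_map (fun q => List.map (fun S => Imp (conjq q S) (Var q)) (subs (Aq q L))) (enum 'I_n).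

Lemma isF_Aq n (q : 'I_n) L : (forall x, List.In x L -> isF x) -> forall x, List.In x (Aq q L) -> isF x.
Proof.
move=> HL x Hx; rewrite /Aq !List.in_app_iff !List.in_map_iff in Hx.
case: Hx => [[i [<- _]]|[[i [<- _]]|[/HL //|[p [<- Hp]]]]].
- constructor.
- by constructor; constructor.
- constructor; [exact: HL|constructor].
Qed.

Lemma subs_sub (X : Type) (l S : list X) : List.In S (subs l) -> forall x, List.In x S -> List.In x l.
Proof.
elim: l S => [|y l IH] S /=.
- by case=> [<-|[]].
- rewrite List.in_app_iff List.in_map_iff; case=> [/IH H x /H Hx|[S' [<- /IH H]]]; first by right.
  by move=> x [->|/H]; [left|right].
Qed.

Lemma isF_cands n (L : list (form n)) : (forall x, List.In x L -> isF x) -> forall x, List.In x (cands L) -> isF x.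
Proof.
move=> HL x; rewrite List.in_flat_map; case=> q [_]; rewrite List.in_map_iff; case=> S [<- HS].
constructor; last by constructor.
apply: isF_conj => y Hy; apply: (isF_Aq HL); exact: subs_sub HS _ Hy.
Qed.

Lemma in_cands n (L : list (form n)) q S : List.In S (subs (Aq q L)) -> List.In (Imp (conjq q S) (Var q)) (cands L).
Proof.
move=> HS; apply/List.in_flat_map; exists q; split; first exact: in_enum_ord.
exact: (List.in_map (fun S => Imp (conjq q S) (Var q))).
Qed.

Section Model.
Variables (n : nat) (T : Type) (le : T -> T -> Prop).
Hypothesis le_refl : forall x, le x x.
Hypothesis le_trans : forall x y z, le x y -> le y z -> le x z.
Variable c : T -> 'I_n -> bool.
Hypothesis c_mono : forall x y i, le x y -> c x i -> c y i.
Hypothesis HB : has_borders le c.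
Variable f : Ms le c -> UPt n.
Hypothesis Hf : is_pmorphism f.

Local Notation S := (Ms le c).
Local Notation sat := (sat le c).

Lemma sat_mono (x y : T) (a : form n) : le x y -> sat x a -> sat y a.
Proof.
elim: a x y => [i||a IHa b IHb|a IHa b IHb|a IHa b IHb] x y Hxy /=.
- exact: c_mono.
- by [].
- by case=> H1 H2; split; [exact: IHa H1|exact: IHb H2].
- by case=> H; [left; exact: IHa H|right; exact: IHb H].
- move=> H z Hyz; apply: H; exact: le_trans Hxy Hyz.
Qed.

Lemma lem1 (a : form n) : isF a -> forall x, sat x a <-> (forall s : S, le x (proj1_sig s) -> sat (proj1_sig s) a).
Proof.
move=> Ha x; split; first by move=> H s Hs; exact: sat_mono Hs H.
elim: Ha x => [i|a1 b1 _ IHa _ IHb|a1 b1 _ _ _ IHb] x H /=.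
- apply: NNPP => Hn; have [y [Hxy Hb]] := HB Hn.
  have Hy := H (exist _ y (ex_intro _ i Hb)) Hxy; exact: (proj1 Hb) Hy.
- split; [apply: IHa|apply: IHb] => s Hs; by case: (H s Hs).
- move=> y Hxy Hya; apply: IHb => s Hs; apply: (H s (le_trans Hxy Hs)); first exact: le_refl.
  exact: sat_mono Hs Hya.
Qed.

Lemma Hf1 s t : Ms_le s t -> U_le (f s) (f t).
Proof. by case: Hf => H _ _; exact: H. Qed.
Lemma Hf2 s i : c (proj1_sig s) i = true <-> umem (f s) (Var i).
Proof. by case: Hf => _ H _; exact: H. Qed.
Lemma Hf3 s G : U_le (f s) G -> exists t, Ms_le s t /\ f t = G.
Proof. by case: Hf => _ _ H; exact: H. Qed.

Lemma link (a : form n) : isF a -> forall s : S, sat (proj1_sig s) a <-> umem (f s) a.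
Proof.
elim=> [i|a1 b1 _ IHa _ IHb|a1 b1 Fa IHa Fb IHb] s /=.
- exact: Hf2.
- by rewrite mem_and IHa IHb.
- rewrite mem_imp; split.
  + move=> H G HG; have [t [Hst <-]] := Hf3 HG.
    move/IHa => Ha; apply/IHb; exact: H Hst Ha.
  + move=> H y Hsy Hya; apply/(lem1 Fb) => t Hyt.
    have Hst : Ms_le s t by exact: le_trans Hsy Hyt.
    apply/IHb; apply: H; first exact: Hf1 Hst.
    apply/IHa; exact: sat_mono Hyt Hya.
Qed.


Definition inImg (w : UPt n) := exists s, f s = w.

Lemma img_up w G : inImg w -> U_le w G -> inImg G.
Proof. move=> [s <-] /Hf3 [t [_ <-]]; by exists t. Qed.

Lemma img_border w : inImg w -> exists q, ~ umem w (Var q) /\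
  forall G, U_le w G -> ~ U_le G w -> umem G (Var q).
Proof.
move=> [s <-]; case: (proj2_sig s) => q [Hq Hup]; exists q; split.
- move/Hf2 => H; exact: Hq H.
- move=> G HG HGn; have [t [Hst Ht]] := Hf3 HG.
  case: (classic (proj1_sig t = proj1_sig s)) => Heq.
  + exfalso; apply: HGn; rewrite -Ht; apply: Hf1; rewrite /Ms_le Heq; exact: le_refl.
  + rewrite -Ht; apply/Hf2; exact: Hup _ Hst Heq.
Qed.

Definition defs (p : form n) (w : UPt n) :=
  isF p /\ forall v, inImg v -> (umem v p <-> ~ U_le v w).

Lemma defin k : exists L : list (form n), (forall p, List.In p L -> isF p) /\
  forall w, inImg w -> nf w < k -> exists p, List.In p L /\ defs p w.
Proof.
elim: k => [|k [L [HLF HL]]]; first by exists nil; split.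
exists (L ++ cands L); split.
  move=> p; rewrite List.in_app_iff; case=> [/HLF //|Hp]; exact: (isF_cands HLF Hp).
move=> w Hw Hwk; have Hwk' : nf w <= k by [].
have [q [Hwq Hwb]] := img_border Hw.
pose P (x : form n) :=
  (exists i, x = Var i /\ umem w (Var i)) \/
  (exists i, x = Imp (Var i) (Var q) /\ ~ umem w (Var i)) \/
  (exists u, inImg u /\ nf u < k /\ defs x u /\ ~ U_le w u) \/
  (exists p u, x = Imp p (Var q) /\ inImg u /\ nf u < k /\ defs p u /\ U_le w u).
have [S [HSin HS]] := subs_complete (Aq q L) P.
exists (Imp (conjq q S) (Var q)); split.
  apply: List.in_or_app; right; exact: in_cands.
split.
  constructor; last constructor.
  apply: isF_conj => y /HS [Hy _]; exact: (@isF_Aq _ q L HLF y Hy).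
have HwS : forall x, List.In x S -> umem w x.
  move=> x /HS [_ PX].
  case: PX => [[i [-> Hi]]|PX]; last case: PX => [[i [-> Hi]]|PX]; last case: PX => [[u [Hu [_ [[_ Hdu] Hwu]]]]|[p [u [-> [Hu [_ [[_ Hdu] Hwu]]]]]]].
  - exact: Hi.
  - apply/mem_imp => G HG HGi; apply: Hwb => // HGw; apply: Hi; exact: HGw.
  - by apply/Hdu.
  - apply/mem_imp => G HG HGp; apply: Hwb => // HGw.
    have HG' : inImg G by exact: img_up Hw HG.
    by move/(Hdu G HG'): HGp; apply; exact: U_le_trans HGw Hwu.
have inA1 : forall i, List.In (Var i) (Aq q L).
  move=> i; apply: List.in_or_app; left; apply: (List.in_map (fun i => Var i)); exact: in_enum_ord.
have inA2 : forall i, List.In (Imp (Var i) (Var q)) (Aq q L).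
  move=> i; apply: List.in_or_app; right; apply: List.in_or_app; left.
  apply: (List.in_map (fun i => Imp (Var i) (Var q))); exact: in_enum_ord.
have inA3 : forall p, List.In p L -> List.In p (Aq q L).
  move=> p Hp; apply: List.in_or_app; right; apply: List.in_or_app; right; exact: List.in_or_app (or_introl Hp).
have inA4 : forall p, List.In p L -> List.In (Imp p (Var q)) (Aq q L).
  move=> p Hp; apply: List.in_or_app; right; apply: List.in_or_app; right; apply: List.in_or_app; right.
  exact: (List.in_map (fun p => Imp p (Var q))).
move=> v Hv; rewrite mem_imp; split.
- move=> H Hvw; apply: Hwq; apply: H Hvw _; apply/umem_conj; exact: HwS.
- move=> Hnv G HvG /umem_conj HGS; apply: NNPP => HGq; apply: Hnv.
  have HG : inImg G by exact: img_up Hv HvG.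
  suff HGw : U_le G w by exact: U_le_trans HvG HGw.
  have Hcol : forall i, umem G (Var i) <-> umem w (Var i).
    move=> i; split.
    + move=> HGi; apply: NNPP => Hwi; apply: HGq; apply: mem_mp HGi.
      apply: HGS; apply/HS; split; first exact: inA2.
      by right; left; exists i.
    + move=> Hwi; apply: HGS; apply/HS; split; first exact: inA1.
      by left; exists i.
  have [r [HGr HGb]] := img_border HG.
  have Hbis := @bisim n G w Hcol.
  have H1 : forall X, U_le G X -> ~ U_le X G -> U_le w X.
    move=> X HGX HXG; have HX : inImg X by exact: img_up HG HGX.
    have HXr := HGb X HGX HXG.
    have Hwr : ~ umem w (Var r) by move/Hcol.
    have HGrq : umem G (Imp (Var r) (Var q)).
      apply: HGS; apply/HS; split; first exact: inA2.
      by right; left; exists r.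
    have HXq : umem X (Var q) by apply: mem_mp (HGX _ HGrq) HXr.
    have HnX : nf X < k.
      apply: leq_trans Hwk'; apply: (nf_lt (q:=q)) => // i Hi; apply: HGX; exact/Hcol.
    have [p [HpL [Fp Hdp]]] := HL X HX HnX.
    apply: NNPP => HwX.
    have HGp : umem G p.
      apply: HGS; apply/HS; split; first exact: inA3.
      by right; right; left; exists X; split=> //; split=> //; split.
    by move/(Hdp X HX): (HGX _ HGp); apply; exact: U_le_refl.
  have H2 : forall X, U_le w X -> ~ U_le X w -> U_le G X.
    move=> X HwX HXw; have HX : inImg X by exact: img_up Hw HwX.
    have HXq := Hwb X HwX HXw.
    have HnX : nf X < k.
      apply: leq_trans Hwk'; apply: (nf_lt (q:=q)) => // i Hi; exact: HwX.
    have [p [HpL [Fp Hdp]]] := HL X HX HnX.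
    have HGpq : umem G (Imp p (Var q)).
      apply: HGS; apply/HS; split; first exact: inA4.
      by right; right; right; exists p, X; split=> //; split=> //; split=> //; split.
    apply: NNPP => HGX; apply: HGq; apply: (mem_mp HGpq); exact: (proj2 (Hdp G HG) HGX).
  move=> a; by move/(Hbis H1 H2).
Qed.

Local Notation MI := (Mimg f).
Local Notation MIle := (@Mimg_le n T le c f).

Lemma upset_def (i0 : 'I_n) (U : MI -> Prop) : upset MIle U ->
  exists p, isF p /\ forall s : S, (U (fimg f s) <-> umem (f s) p).
Proof.
move=> HU.
have [L [HLF HL]] := defin n.+1.
pose U' (w : UPt n) := exists pf : inImg w, U (exist _ w pf).
pose P (x : form n) := exists w, inImg w /\ ~ U' w /\ defs x w.
have [Sl [_ HS]] := subs_complete L P.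
exists (conjq i0 Sl); split.
  apply: isF_conj => y /HS [Hy _]; exact: HLF.
move=> s; rewrite umem_conj; split.
- move=> Hs x /HS [_ [w [Hw [HnU [_ Hdw]]]]]; apply/(Hdw (f s) (ex_intro _ s erefl)) => Hsw.
  apply: HnU; exists Hw; apply: HU Hs; exact: Hsw.
- move=> H; apply: NNPP => Hn.
  have Hfs : inImg (f s) by exists s.
  have [p [HpL [Fp Hdp]]] := HL (f s) Hfs (nf_le (f s)).
  have : umem (f s) p.
    apply: H; apply/HS; split=> //; exists (f s); split=> //; split=> //.
    + rewrite /U' => -[pf Hpf]; apply: Hn; apply: HU Hpf; exact: U_le_refl.
  move/(Hdp _ Hfs); apply; exact: U_le_refl.
Qed.

Lemma rh_F (U : MI -> Prop) p : isF p -> (forall s : S, U (fimg f s) <-> umem (f s) p) ->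
  r (h U) = v le c p.
Proof.
move=> Fp HU; apply: functional_extensionality => x; apply: propositional_extensionality.
rewrite /r /h /v; split.
- move=> H; apply/(lem1 Fp) => s Hs; apply/link => //; apply/HU; exact: H.
- move=> H s Hs; apply/HU; apply/link => //; move/(lem1 Fp): H; exact.
Qed.

Lemma inB_F p : isF p -> inB le c (v le c p).
Proof.
elim=> [i|a b _ Ha _ Hb|a b _ Ha _ Hb]; first exact: inB_var.
- exact: inB_meet Ha Hb.
- exact: inB_imp Ha Hb.
Qed.

Lemma rh_at (U : MI -> Prop) s : upset MIle U -> (r (h U) (proj1_sig s) <-> U (fimg f s)).
Proof.
move=> HU; split.
- move=> H; apply: H; exact: le_refl.
- move=> H t Hst; apply: HU H; exact: Hf1 Hst.
Qed.

Lemma rh_inj (U1 U2 : MI -> Prop) : upset MIle U1 -> upset MIle U2 ->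
  r (h U1) = r (h U2) -> U1 = U2.
Proof.
move=> H1 H2 E; apply: functional_extensionality => w; apply: propositional_extensionality.
case: w => w [s Hs]; subst w.
have E' := f_equal (fun V => V (proj1_sig s)) E; simpl in E'.
change (U1 (fimg f s) <-> U2 (fimg f s)).
rewrite -(rh_at s H1) -(rh_at s H2) E'; by [].
Qed.

Lemma rh_meet (U1 U2 : MI -> Prop) : r (h (meetU U1 U2)) = meetU (r (h U1)) (r (h U2)).
Proof.
apply: functional_extensionality => x; apply: propositional_extensionality.
rewrite /r /h /meetU; split.
- move=> H; split=> s Hs; by case: (H s Hs).
- move=> [H1 H2] s Hs; split; [exact: H1|exact: H2].
Qed.

Lemma upset_meet (U1 U2 : MI -> Prop) : upset MIle U1 -> upset MIle U2 -> upset MIle (meetU U1 U2).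
Proof. move=> H1 H2 x y Hxy [A B]; split; [exact: H1 A|exact: H2 B]. Qed.

Lemma upset_imp (U1 U2 : MI -> Prop) : upset MIle (impU MIle U1 U2).
Proof. move=> x y Hxy H z Hyz; apply: H; exact: U_le_trans Hxy Hyz. Qed.

Lemma rh_imp (U1 U2 : MI -> Prop) : upset MIle U1 -> upset MIle U2 ->
  r (h (impU MIle U1 U2)) = impU le (r (h U1)) (r (h U2)).
Proof.
move=> HU1 HU2; apply: functional_extensionality => x; apply: propositional_extensionality.
rewrite /r /h /impU; split.
- move=> H y Hxy H1 s Hys; apply: (H s (le_trans Hxy Hys)); first exact: U_le_refl.
  exact: H1.
- move=> H s Hxs w Hsw Hw1.
  have [t [Hst Ht]] := Hf3 Hsw.
  apply: (HU2 (fimg f t)); first by rewrite /Mimg_le /= Ht; exact: U_le_refl.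
  apply: (H (proj1_sig t) (le_trans Hxs Hst)); last exact: le_refl.
  move=> s' Hts'; apply: HU1 Hw1; rewrite /Mimg_le -Ht; exact: Hf1 Hts'.
Qed.

Lemma upset_var (i : 'I_n) : upset MIle (fun w : MI => umem (proj1_sig w) (Var i)).
Proof. move=> x y Hxy H; exact: Hxy _ H. Qed.

Lemma rh_var (i : 'I_n) : v le c (Var i) = r (h (fun w : MI => umem (proj1_sig w) (Var i))).
Proof.
symmetry; apply: rh_F; first constructor.
by move=> s.
Qed.

Lemma main (i0 : 'I_n) :
  (forall V : T -> Prop,
      inB le c V <-> exists U : Mimg f -> Prop, upset (@Mimg_le n T le c f) U /\ V = r (h U))
  /\
  (exists g : (Mimg f -> Prop) -> (T -> Prop),
      [/\ (forall U, upset (@Mimg_le n T le c f) U -> inB le c (g U)),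
          (forall V, inB le c V -> exists U, upset (@Mimg_le n T le c f) U /\ g U = V),
          (forall U1 U2, upset (@Mimg_le n T le c f) U1 -> upset (@Mimg_le n T le c f) U2 ->
              g U1 = g U2 -> U1 = U2),
          (forall U1 U2, upset (@Mimg_le n T le c f) U1 -> upset (@Mimg_le n T le c f) U2 ->
              g (meetU U1 U2) = meetU (g U1) (g U2)) &
          (forall U1 U2, upset (@Mimg_le n T le c f) U1 -> upset (@Mimg_le n T le c f) U2 ->
              g (impU (@Mimg_le n T le c f) U1 U2) = impU le (g U1) (g U2))]).
Proof.
have P2 : forall V, inB le c V -> exists U, upset MIle U /\ V = r (h U).
  move=> V; elim=> [i|A B _ [U1 [HU1 E1]] _ [U2 [HU2 E2]]|A B _ [U1 [HU1 E1]] _ [U2 [HU2 E2]]].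
  - exists (fun w : MI => umem (proj1_sig w) (Var i)); split; [exact: upset_var|exact: rh_var].
  - exists (meetU U1 U2); split; first exact: upset_meet.
    by rewrite rh_meet E1 E2.
  - exists (impU MIle U1 U2); split; first exact: upset_imp.
    by rewrite rh_imp // E1 E2.
have P1 : forall U, upset MIle U -> inB le c (r (h U)).
  move=> U HU; have [p [Fp Hp]] := upset_def i0 HU.
  rewrite (rh_F Fp Hp); exact: inB_F.
split.
- move=> V; split; first exact: P2. by move=> [U [HU ->]]; exact: P1.
- exists (fun U => r (h U)); split.
  + exact: P1.
  + move=> V /P2 [U [HU ->]]; by exists U.
  + exact: rh_inj.
  + move=> U1 U2 _ _; exact: rh_meet.
  + exact: rh_imp.
Qed.

End Model.

Unset Implicit Arguments.
Theorem theorem3p16 (n : nat) (Hn : 0 < n) (T : Type) (le : T -> T -> Prop)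
  (le_refl : forall x, le x x)
  (le_trans : forall x y z, le x y -> le y z -> le x z)
  (le_anti : forall x y, le x y -> le y x -> x = y)
  (c : T -> 'I_n -> bool)
  (c_mono : forall x y i, le x y -> c x i -> c y i)
  (HB : has_borders le c)
  (f : Ms le c -> UPt n) (Hf : is_pmorphism f) :
  (forall V : T -> Prop,
      inB le c V <-> exists U : Mimg f -> Prop, upset (@Mimg_le n T le c f) U /\ V = r (h U))
  /\
  (exists g : (Mimg f -> Prop) -> (T -> Prop),
      [/\ (forall U, upset (@Mimg_le n T le c f) U -> inB le c (g U)),
          (forall V, inB le c V -> exists U, upset (@Mimg_le n T le c f) U /\ g U = V),
          (forall U1 U2, upset (@Mimg_le n T le c f) U1 -> upset (@Mimg_le n T le c f) U2 ->
              g U1 = g U2 -> U1 = U2),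
          (forall U1 U2, upset (@Mimg_le n T le c f) U1 -> upset (@Mimg_le n T le c f) U2 ->
              g (meetU U1 U2) = meetU (g U1) (g U2)) &
          (forall U1 U2, upset (@Mimg_le n T le c f) U1 -> upset (@Mimg_le n T le c f) U2 ->
              g (impU (@Mimg_le n T le c f) U1 U2) = impU le (g U1) (g U2))]).
Proof.
exact: (@main n T le le_refl le_trans c c_mono HB f Hf (Ordinal Hn)).
Qed.
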